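(* If a solitary wave in $\mathcal W$ satisfies $u_x<0$ in $\Omega^+\cup S^+$, then $\sup_{\overline\Omega}|v/u|<1$.
   Context: Fix constants $g>0$ and $P_{\mathrm{atm}}$. A solitary wave is a tuple $(u,v,P,\eta,u_\infty,d)$ with $d>0$, $\eta\in C^4_{\mathrm{bdd}}(\mathbb R)$, $u_\infty\in C^3[-d,0]$, $u,v,P\in C^3_{\mathrm{bdd}}(\overline\Omega)$ (bounded continuous derivatives up to the given order), where $\Omega=\{(x,y):x\in\mathbb R,\ -d<y<\eta(x)\}$, with $u,P,\eta$ even in $x$ and $v$ odd in $x$, satisfying $uu_x+vu_y=-P_x$, $uv_x+vv_y=-P_y-g$, $u_x+v_y=0$ in $\Omega$; $P=P_{\mathrm{atm}}$ and $v=\eta_xu$ on $y=\eta(x)$; $v=0$ on $y=-d$; and, uniformly in $y$, $D^kv\to0$, $\eta\to0$, $D^ku(x,y)\to D^ku_\infty(y)$ as $x\to\pm\infty$ for $k=0,1,2$. It is assumed that $\sup_\Omega u<0$. There is then a stream function $\psi$ with $\psi_y=u$, $\psi_x=-v$, $\psi=0$ on the free surface, $\psi=m>0$ on $y=-d$, and a vorticity function $\gamma\in C^2[0,m]$ with $v_x-u_y=\gamma(\psi)$; it is assumed $\gamma\le0,\gamma'\le0,\gamma''\le0$ on $(0,m)$. A wave is trivial if $u,v,\eta,P$ depend only on $y$. Let $\Omega^+=\{x>0,\ -d<y<\eta(x)\}$, $S^+=\{(x,\eta(x)):x>0\}$. A wave is monotone if $v>0$ in $\Omega^+\cup S^+$.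 $\mathcal W$ is the set of such solitary waves that are monotone or trivial. *)

(* Defs.v *)
From Stdlib Require Import Reals List.
From Coquelicot Require Import Coquelicot.
Open Scope R_scope.

Definition pDx (f : R -> R -> R) : R -> R -> R :=
  fun x y => Derive (fun t => f t y) x.
Definition pDy (f : R -> R -> R) : R -> R -> R :=
  fun x y => Derive (fun t => f x t) y.

Fixpoint pD (w : list bool) (f : R -> R -> R) : R -> R -> R :=
  match w with
  | nil => f
  | b :: w' => (if b then pDx else pDy) (pD w' f)
  end.

Definition Ck_on (k : nat) (U : R * R -> Prop) (f : R -> R -> R) : Prop :=
  forall (w : list bool) (x y : R), U (x, y) ->
    ((length w < k)%nat ->
       ex_derive (fun t => pD w f t y) x /\ ex_derive (fun t => pD w f x t) y) /\
    ((length w <= k)%nat ->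
       continuous (fun p : R * R => pD w f (fst p) (snd p)) (x, y)).

Definition Ckbdd_on (k : nat) (D : R -> R -> Prop) (f : R -> R -> R) : Prop :=
  (exists U : R * R -> Prop,
      open U /\ (forall x y, D x y -> U (x, y)) /\ Ck_on k U f) /\
  (exists B : R, forall (w : list bool) (x y : R),
      (length w <= k)%nat -> D x y -> Rabs (pD w f x y) <= B).

Definition Ckbdd_R (k : nat) (f : R -> R) : Prop :=
  (forall (n : nat) (x : R), (n < k)%nat -> ex_derive (Derive_n f n) x) /\
  (forall (n : nat) (x : R), (n <= k)%nat -> continuous (Derive_n f n) x) /\
  (exists B : R, forall (n : nat) (x : R), (n <= k)%nat -> Rabs (Derive_n f n x) <= B).

Definition Ck_interval (k : nat) (a b : R) (f : R -> R) : Prop :=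
  exists delta : R, 0 < delta /\
    forall (n : nat) (z : R), a - delta < z < b + delta ->
      ((n < k)%nat -> ex_derive (Derive_n f n) z) /\
      ((n <= k)%nat -> continuous (Derive_n f n) z).

Definition Omega (d : R) (eta : R -> R) (x y : R) : Prop := -d < y < eta x.
Definition Omega_bar (d : R) (eta : R -> R) (x y : R) : Prop := -d <= y <= eta x.

Record solitary_wave (g Patm : R) (u v P : R -> R -> R) (eta uinf : R -> R)
    (d : R) : Prop := {
  sw_d_pos : 0 < d;
  sw_eta_above_bed : forall x, -d < eta x;
  sw_eta_reg : Ckbdd_R 4 eta;
  sw_uinf_reg : Ck_interval 3 (-d) 0 uinf;
  sw_u_reg : Ckbdd_on 3 (Omega_bar d eta) u;
  sw_v_reg : Ckbdd_on 3 (Omega_bar d eta) v;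
  sw_P_reg : Ckbdd_on 3 (Omega_bar d eta) P;
  sw_eta_even : forall x, eta (- x) = eta x;
  sw_parity : forall x y, Omega_bar d eta x y ->
      u (- x) y = u x y /\ P (- x) y = P x y /\ v (- x) y = - v x y;
  sw_euler_x : forall x y, Omega d eta x y ->
      u x y * pDx u x y + v x y * pDy u x y = - pDx P x y;
  sw_euler_y : forall x y, Omega d eta x y ->
      u x y * pDx v x y + v x y * pDy v x y = - pDy P x y - g;
  sw_incompressible : forall x y, Omega d eta x y ->
      pDx u x y + pDy v x y = 0;
  sw_dynamic : forall x, P x (eta x) = Patm;
  sw_kinematic : forall x, v x (eta x) = Derive eta x * u x (eta x);
  sw_bed : forall x, v x (- d) = 0;
  sw_decay : forall eps, 0 < eps -> exists M, forall x, M < Rabs x ->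
      Rabs (eta x) < eps /\
      forall (y : R) (w : list bool), Omega_bar d eta x y -> (length w <= 2)%nat ->
        Rabs (pD w v x y) < eps /\
        Rabs (pD w u x y - pD w (fun _ y' => uinf y') x y) < eps
}.

Definition sup_u_neg (d : R) (eta : R -> R) (u : R -> R -> R) : Prop :=
  exists c : R, c < 0 /\ forall x y, Omega d eta x y -> u x y <= c.

Definition stream_vorticity_hyp (d : R) (eta : R -> R) (u v : R -> R -> R) : Prop :=
  exists (psi : R -> R -> R) (m : R) (gamma : R -> R),
    0 < m /\
    (forall x y, Omega d eta x y ->
        ex_derive (fun t => psi t y) x /\ ex_derive (fun t => psi x t) y /\
        pDy psi x y = u x y /\ pDx psi x y = - v x y) /\
    (forall x y, Omega_bar d eta x y ->
        filterlim (fun p : R * R => psi (fst p) (snd p))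
          (within (fun p : R * R => Omega_bar d eta (fst p) (snd p)) (locally (x, y)))
          (locally (psi x y))) /\
    (forall x, psi x (eta x) = 0) /\
    (forall x, psi x (- d) = m) /\
    Ck_interval 2 0 m gamma /\
    (forall x y, Omega_bar d eta x y -> pDx v x y - pDy u x y = gamma (psi x y)) /\
    (forall z, 0 < z < m ->
        gamma z <= 0 /\ Derive gamma z <= 0 /\ Derive_n gamma 2 z <= 0).

Definition trivial_wave (d : R) (eta : R -> R) (u v P : R -> R -> R) : Prop :=
  (forall x1 x2, eta x1 = eta x2) /\
  (forall x1 x2 y, Omega_bar d eta x1 y -> Omega_bar d eta x2 y ->
      u x1 y = u x2 y /\ v x1 y = v x2 y /\ P x1 y = P x2 y).

Definition monotone_wave (d : R) (eta : R -> R) (v : R -> R -> R) : Prop :=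
  forall x y, 0 < x -> -d < y <= eta x -> 0 < v x y.

Definition in_W (g Patm : R) (u v P : R -> R -> R) (eta uinf : R -> R) (d : R) : Prop :=
  solitary_wave g Patm u v P eta uinf d /\
  sup_u_neg d eta u /\
  stream_vorticity_hyp d eta u v /\
  (monotone_wave d eta v \/ trivial_wave d eta u v P).

(* Main.v *)
Require Import Defs.
From Stdlib Require Import Reals List Lra Lia.
From Coquelicot Require Import Coquelicot.
Open Scope R_scope.

Lemma DL_pol1 f x y dx dy : DL_pol 1 f x y dx dy = f x y + (Derive (fun t => f t y) x * dx + Derive (fun t => f x t) y * dy).
Proof. unfold DL_pol, differential, partial_derive. simpl. unfold Binomial.C. simpl. field. Qed.

Lemma Ck_cont2d k U f w x y : Ck_on k U f -> U (x,y) -> (length w <= k)%nat ->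
  continuity_2d_pt (pD w f) x y.
Proof.
  intros H HU Hw. apply continuity_2d_pt_filterlim. apply (proj2 (H w x y HU) Hw).
Qed.

Lemma Ck_exd k U f w x y : Ck_on k U f -> U (x,y) -> (length w < k)%nat ->
  ex_derive (fun t => pD w f t y) x /\ ex_derive (fun t => pD w f x t) y.
Proof. intros H HU Hw. apply (proj1 (H w x y HU) Hw). Qed.

Lemma open_loc2d (U : R*R -> Prop) x y : open U -> U (x,y) -> locally_2d (fun u v => U (u,v)) x y.
Proof.
  intros HU Hxy. apply locally_2d_locally. 
  apply (locally_open U). exact HU. intros [a b]; simpl; auto. exact Hxy.
Qed.

Lemma Ck3_diffn2 U f x y : Ck_on 3 U f -> U (x,y) -> ex_diff_n f 2 x y.
Proof.
  intros H HU.
  assert (C := fun w (Hw : (length w <= 3)%nat) => Ck_cont2d 3 U f w x y H HU Hw).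
  assert (E := fun w (Hw : (length w < 3)%nat) => Ck_exd 3 U f w x y H HU Hw).
  simpl. repeat split.
  - apply (C nil); simpl; lia.
  - apply (E nil); simpl; lia.
  - apply (E nil); simpl; lia.
  - apply (C (true::nil)); simpl; lia.
  - apply (E (true::nil)); simpl; lia.
  - apply (E (true::nil)); simpl; lia.
  - apply (C (true::true::nil)); simpl; lia.
  - apply (C (false::true::nil)); simpl; lia.
  - apply (C (false::nil)); simpl; lia.
  - apply (E (false::nil)); simpl; lia.
  - apply (E (false::nil)); simpl; lia.
  - apply (C (true::false::nil)); simpl; lia.
  - apply (C (false::false::nil)); simpl; lia.
Qed.

Lemma Ck3_diff U f x y : open U -> Ck_on 3 U f -> U (x,y) ->
  differentiable_pt_lim f x y (pDx f x y) (pDy f x y).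
Proof.
  intros HO H HU.
  destruct (Taylor_Lagrange_2d f 1 x y) as [D [d0 Hd0]].
  { destruct (open_loc2d U x y HO HU) as [e He].
    exists e. intros u v Hu Hv. apply (Ck3_diffn2 U); auto. }
  intros eps.
  assert (HDp : 0 < Rabs D + 1) by (pose proof (Rabs_pos D); lra).
  assert (Hm : 0 < Rmin d0 (eps / (Rabs D + 1))).
  { apply Rmin_pos. apply cond_pos. apply Rdiv_lt_0_compat; [apply cond_pos|lra]. }
  exists (mkposreal _ Hm). simpl. intros u v Hu Hv.
  assert (Hu0 : Rabs (u - x) < d0) by (eapply Rlt_le_trans; [exact Hu| apply Rmin_l]).
  assert (Hv0 : Rabs (v - y) < d0) by (eapply Rlt_le_trans; [exact Hv| apply Rmin_l]).
  specialize (Hd0 u v Hu0 Hv0). rewrite DL_pol1 in Hd0. unfold pDx, pDy.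
  set (M := Rmax (Rabs (u - x)) (Rabs (v - y))) in *.
  assert (HM0 : 0 <= M) by (unfold M; eapply Rle_trans; [apply Rabs_pos|apply Rmax_l]).
  assert (HMe : M <= eps / (Rabs D + 1)).
  { unfold M. apply Rmax_case; left; eapply Rlt_le_trans; [exact Hu|apply Rmin_r| exact Hv| apply Rmin_r]. }
  replace (f u v - f x y - (Derive (fun t => f t y) x * (u - x) + Derive (fun t => f x t) y * (v - y)))
    with (f u v - (f x y + (Derive (fun t => f t y) x * (u - x) + Derive (fun t => f x t) y * (v - y)))) by ring.
  eapply Rle_trans; [exact Hd0|].
  assert (D <= Rabs D) by apply Rle_abs.
  assert ((Rabs D + 1) * M <= eps).
  { apply (Rmult_le_compat_l (Rabs D + 1)) in HMe; [|lra].
    replace ((Rabs D + 1) * (eps / (Rabs D + 1))) with (pos eps) in HMe by (field; lra). lra. }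
  simpl. nra.
Qed.

Definition cont1 (g : R -> R) (y : R) : Prop :=
  forall eps, 0 < eps -> exists del, 0 < del /\ forall t, Rabs (t - y) < del -> Rabs (g t - g y) < eps.

Lemma cont1_of_continuous (f : R -> R) x : continuous f x -> cont1 f x.
Proof.
  intros H eps He. apply filterlim_locally with (eps := mkposreal eps He) in H.
  destruct H as [del Hd]. exists del. split. apply cond_pos.
  intros t Ht. apply Hd. exact Ht.
Qed.

Lemma cont1_of_2d_x f x y : continuity_2d_pt f x y -> cont1 (fun t => f x t) y.
Proof.
  intros H eps He. destruct (H (mkposreal eps He)) as [del Hd]. exists del. split. apply cond_pos.
  intros t Ht. apply Hd; auto. rewrite Rminus_diag, Rabs_R0. apply cond_pos.
Qed.

Lemma cont1_of_2d_y f x y : continuity_2d_pt f x y -> cont1 (fun t => f t y) x.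
Proof.
  intros H eps He. destruct (H (mkposreal eps He)) as [del Hd]. exists del. split. apply cond_pos.
  intros t Ht. apply Hd; auto. rewrite Rminus_diag, Rabs_R0. apply cond_pos.
Qed.

Lemma closure_le g a b y c : a < b -> a <= y <= b -> cont1 g y ->
  (forall t, a < t < b -> g t <= c) -> g y <= c.
Proof.
  intros Hab Hy Hc Hg. destruct (Rle_dec (g y) c) as [|Hn]; auto. exfalso.
  destruct (Hc (g y - c)) as [del [Hd Ht]]; [lra|].
  destruct (Rlt_dec y b) as [Hyb|Hyb].
  - set (t := y + Rmin del (b - y) / 2).
    assert (0 < Rmin del (b - y)) by (apply Rmin_pos; lra).
    assert (Rmin del (b - y) <= del) by apply Rmin_l.
    assert (Rmin del (b - y) <= b - y) by apply Rmin_r.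
    assert (Hgt := Hg t ltac:(unfold t; lra)).
    assert (Hct := Ht t ltac:(unfold t; rewrite Rabs_right; lra)).
    apply Rabs_def2 in Hct. lra.
  - set (t := y - Rmin del (b - a) / 2).
    assert (0 < Rmin del (b - a)) by (apply Rmin_pos; lra).
    assert (Rmin del (b - a) <= del) by apply Rmin_l.
    assert (Rmin del (b - a) <= b - a) by apply Rmin_r.
    assert (Hgt := Hg t ltac:(unfold t; lra)).
    assert (Hct := Ht t ltac:(unfold t; rewrite Rabs_left; lra)).
    apply Rabs_def2 in Hct. lra.
Qed.

Lemma closure_ge g a b y c : a < b -> a <= y <= b -> cont1 g y ->
  (forall t, a < t < b -> c <= g t) -> c <= g y.
Proof.
  intros Hab Hy Hc Hg.
  assert (H : (fun t => - g t) y <= - c).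
  { apply (closure_le (fun t => - g t) a b); auto. unfold cont1.
    - intros eps He. destruct (Hc eps He) as [del [Hd Ht]]. exists del; split; auto.
      intros t Ht'. specialize (Ht t Ht'). replace (- g t - - g y) with (- (g t - g y)) by ring.
      rewrite Rabs_Ropp; auto.
    - intros t Ht. specialize (Hg t Ht). lra. }
  simpl in H. lra.
Qed.

Lemma closure_eq g a b y c : a < b -> a <= y <= b -> cont1 g y ->
  (forall t, a < t < b -> g t = c) -> g y = c.
Proof.
  intros. apply Rle_antisym.
  apply (closure_le g a b); auto. intros t Ht; rewrite H2; auto; lra.
  apply (closure_ge g a b); auto. intros t Ht; rewrite H2; auto; lra.
Qed.

Lemma list_max {A} (g : A -> R) (l : list A) : (forall t, In t l -> g t < 1) ->
  exists c, c < 1 /\ forall t, In t l -> g t <= c.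
Proof.
  induction l as [|a l IH]; intros H.
  - exists 0. split. lra. intros t [].
  - destruct IH as [c [Hc Hl]]. intros t Ht; apply H; right; auto.
    exists (Rmax c (g a)). split. apply Rmax_case; auto. apply H; left; auto.
    intros t [<-|Ht]. apply Rmax_r. eapply Rle_trans; [apply Hl; auto|apply Rmax_l].
Qed.

Lemma clamp_lip p q s q' s' : Rabs (Rmax p (Rmin q s) - Rmax p (Rmin q' s')) <= Rabs (q - q') + Rabs (s - s').
Proof.
  unfold Rmax, Rmin, Rabs. repeat (destruct Rle_dec || destruct Rcase_abs); lra.
Qed.

Lemma lub_props (E : R -> Prop) (x : R) T : is_lub E T -> E 0 -> (forall t, E t -> t <= x) ->
  0 <= T <= x.
Proof.
  intros [Hub Hl] H0 Hb. split. apply Hub; auto. apply Hl. intros t Ht; auto.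
Qed.

Lemma surface_abstract (e K H l : R -> R) :
  0 < e 0 ->
  (forall s, 0 <= s -> cont1 e s) ->
  (forall s, 0 <= s -> K s < 0 /\ H s = K s * e s) ->
  (forall s, 0 < s -> e s = 0 -> derivable_pt_lim H s (l s) /\ l s < 0) ->
  forall x, 0 <= x -> 0 < e x.
Proof.
  intros He0 Hc HK Hd x Hx.
  destruct (Rlt_dec 0 (e x)) as [|Hn]; auto. exfalso.
  set (E := fun t => 0 <= t <= x /\ forall r, 0 <= r <= t -> 0 < e r).
  assert (HE0 : E 0). { split. lra. intros r Hr. replace r with 0 by lra. auto. }
  assert (Hb : bound E). { exists x. intros t [Ht _]. lra. }
  destruct (completeness E Hb (ex_intro _ 0 HE0)) as [T HT].
  assert (HTx := lub_props E x T HT HE0 ltac:(intros t [Ht _]; lra)).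
  assert (Hlt : forall r, 0 <= r < T -> 0 < e r).
  { intros r Hr. destruct (Classical_Prop.classic (exists t, E t /\ r < t)) as [[t [[_ Ht] Hrt]]|Hno].
    apply Ht; lra. exfalso. destruct HT as [_ Hl].
    assert (T <= r). { apply Hl. intros t Ht. destruct (Rle_dec t r); auto. exfalso; apply Hno. exists t; split; auto; lra. }
    lra. }
  assert (HeT : 0 <= e T).
  { destruct (Rlt_dec 0 T) as [HT0|HT0].
    - apply (closure_ge e 0 T T 0); auto; try lra. apply Hc; lra. intros t Ht; left; apply Hlt; lra.
    - replace T with 0 by lra. lra. }
  apply Rnot_lt_le in Hn.
  assert (HeT0 : e T = 0).
  { destruct (Rlt_dec 0 (e T)) as [Hp|]; [|lra]. exfalso.
    assert (HTx' : T < x). { destruct (Req_dec T x) as [Heq|]. rewrite Heq in Hp; lra. lra. }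
    destruct (Hc T ltac:(lra) (e T) Hp) as [del [Hdel Hct]].
    set (t := T + Rmin del (x - T) / 2).
    assert (0 < Rmin del (x - T)) by (apply Rmin_pos; lra).
    assert (Rmin del (x - T) <= del) by apply Rmin_l.
    assert (Rmin del (x - T) <= x - T) by apply Rmin_r.
    assert (E t).
    { split. unfold t; lra. intros r Hr. destruct (Rlt_dec r T) as [|Hrt]. apply Hlt; lra. apply Rnot_lt_le in Hrt.
      specialize (Hct r ltac:(rewrite Rabs_right; unfold t in *; lra)). apply Rabs_def2 in Hct. lra. }
    destruct HT as [Hub _]. specialize (Hub t H3). unfold t in Hub. lra. }
  assert (HT0 : 0 < T). { destruct (Req_dec T 0) as [Heq|]. rewrite Heq in HeT0; lra. lra. }
  destruct (Hd T HT0 HeT0) as [HdT HlT].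
  destruct (HdT (- l T / 2) ltac:(lra)) as [del Hdel].
  set (h := - Rmin (del / 2) T).
  assert (0 < Rmin (del/2) T) by (apply Rmin_pos; [apply Rdiv_lt_0_compat; [apply cond_pos|lra]|lra]).
  assert (Rmin (del/2) T <= del/2) by apply Rmin_l.
  assert (Rmin (del/2) T <= T) by apply Rmin_r.
  assert (Hdp := cond_pos del).
  specialize (Hdel h ltac:(unfold h; lra) ltac:(unfold h; rewrite Rabs_left; lra)).
  destruct (HK T ltac:(lra)) as [_ HHT]. rewrite HeT0, Rmult_0_r in HHT. rewrite HHT in Hdel.
  destruct (HK (T + h) ltac:(unfold h; lra)) as [HKn HHn].
  assert (He' : 0 < e (T + h)) by (apply Hlt; unfold h; lra).
  assert (HHneg : H (T + h) < 0) by (rewrite HHn; nra).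
  apply Rabs_def2 in Hdel. destruct Hdel as [Hd1 Hd2].
  rewrite Rminus_0_r in Hd1, Hd2.
  assert (Hh : h < 0) by (unfold h; lra).
  assert (Hq : H (T + h) / h > 0).
  { unfold Rdiv. assert (/ h < 0) by (apply Rinv_lt_0_compat; lra). nra. }
  lra.
Qed.

Lemma line_abstract (psi phi dphi : R -> R) x :
  0 < x ->
  (forall r, 0 <= r <= x -> cont1 psi r) ->
  0 <= psi 0 ->
  (forall r, 0 <= r <= x -> 0 <= psi r ->
     derivable_pt_lim phi r (dphi r) /\ (0 < r < x -> 0 < dphi r)) ->
  (0 <= psi x -> phi x < 0) ->
  (forall r, 0 <= r < x -> psi r = 0 -> phi r < 0) ->
  phi 0 < 0.
Proof.
  intros Hx Hc H0 Hd Hend Hsurf.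
  set (E := fun t => 0 <= t <= x /\ forall r, 0 <= r <= t -> 0 <= psi r).
  assert (HE0 : E 0). { split. lra. intros r Hr. replace r with 0 by lra. auto. }
  assert (Hb : bound E). { exists x. intros t [Ht _]. lra. }
  destruct (completeness E Hb (ex_intro _ 0 HE0)) as [T HT].
  assert (HTx := lub_props E x T HT HE0 ltac:(intros t [Ht _]; lra)).
  assert (Hlt : forall r, 0 <= r < T -> 0 <= psi r).
  { intros r Hr. destruct (Classical_Prop.classic (exists t, E t /\ r < t)) as [[t [[_ Ht] Hrt]]|Hno].
    apply Ht; lra. exfalso. destruct HT as [_ Hl].
    assert (T <= r). { apply Hl. intros t Ht. destruct (Rle_dec t r); auto. exfalso; apply Hno. exists t; split; auto; lra. }
    lra. }
  assert (HpT : 0 <= psi T).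
  { destruct (Rlt_dec 0 T) as [HT0|HT0].
    - apply (closure_ge psi 0 T T 0); auto; try lra. intros t Ht; apply Hlt; lra.
    - replace T with 0 by lra. lra. }
  assert (Hall : forall r, 0 <= r <= T -> 0 <= psi r).
  { intros r Hr. destruct (Req_dec r T) as [->|]; auto. apply Hlt; lra. }
  assert (HphiT : phi T < 0).
  { destruct (Req_dec T x) as [Heq|Hne]. rewrite Heq in HpT |- *. auto.
    destruct (Req_dec (psi T) 0) as [Hz|Hnz]. apply Hsurf; auto; lra.
    exfalso. assert (Hp : 0 < psi T) by lra.
    destruct (Hc T ltac:(lra) (psi T) Hp) as [del [Hdel Hct]].
    set (t := T + Rmin del (x - T) / 2).
    assert (0 < Rmin del (x - T)) by (apply Rmin_pos; lra).
    assert (Rmin del (x - T) <= del) by apply Rmin_l.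
    assert (Rmin del (x - T) <= x - T) by apply Rmin_r.
    assert (E t).
    { split. unfold t; lra. intros r Hr. destruct (Rlt_dec r T) as [|Hrt]. apply Hlt; lra. apply Rnot_lt_le in Hrt.
      specialize (Hct r ltac:(rewrite Rabs_right; unfold t in *; lra)). apply Rabs_def2 in Hct. lra. }
    destruct HT as [Hub _]. specialize (Hub t H3). unfold t in Hub. lra. }
  destruct (Req_dec T 0) as [HT0|HT0]. rewrite HT0 in HphiT; auto.
  destruct (MVT_cor2 phi dphi 0 T ltac:(lra)) as [c [Hmvt Hcc]].
  { intros c Hc'. apply (Hd c); [lra| apply Hall; lra]. }
  assert (0 < dphi c) by (apply (Hd c); [lra|apply Hall; lra|lra]).
  nra.
Qed.

From Stdlib Require Import ClassicalEpsilon.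

Lemma compact_sup (F : R -> R -> R) a b a' b' :
  (forall x y, a <= x <= b -> a' <= y <= b' -> continuity_2d_pt F x y /\ F x y < 1) ->
  exists c, c < 1 /\ forall x y, a <= x <= b -> a' <= y <= b' -> F x y <= c.
Proof.
  intros HF.
  set (rect := fun x y => a <= x <= b /\ a' <= y <= b').
  assert (Hex : forall x y, exists del : posreal, rect x y ->
     forall u v, Rabs (u - x) < del -> Rabs (v - y) < del -> F u v < (1 + F x y) / 2).
  { intros x y. destruct (excluded_middle_informative (rect x y)) as [Hr|Hr].
    - destruct Hr as [Hx Hy]. destruct (HF x y Hx Hy) as [Hc H1].
      assert (He : 0 < (1 - F x y) / 2) by lra.
      destruct (Hc (mkposreal _ He)) as [del Hd]. exists del. intros _ u v Hu Hv.
      specialize (Hd u v Hu Hv). simpl in Hd. apply Rabs_def2 in Hd. lra.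
    - exists (mkposreal 1 Rlt_0_1). intros Hr'. contradiction. }
  set (delta := fun x y => proj1_sig (constructive_indefinite_description _ (Hex x y))).
  assert (Hdelta : forall x y, rect x y -> forall u v, Rabs (u - x) < delta x y -> Rabs (v - y) < delta x y -> F u v < (1 + F x y) / 2).
  { intros x y. unfold delta. destruct constructive_indefinite_description as [del Hd]. simpl. exact Hd. }
  set (delta' := fun p : Compactness.Tn 2 R => match p with (x, (y, _)) => delta x y end).
  apply Classical_Prop.NNPP. intro Hno.
  apply (compactness_list 2 (a, (a', tt)) (b, (b', tt)) delta'). intros [l Hl].
  apply Hno.
  set (g := fun p : Compactness.Tn 2 R => match p with (x, (y, _)) =>
     if excluded_middle_informative (rect x y) then (1 + F x y) / 2 else 0 end).
  destruct (list_max g l) as [c [Hc Hlc]].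
  { intros [x [y []]] _. unfold g. destruct excluded_middle_informative as [[Hx Hy]|]; [|lra].
    destruct (HF x y Hx Hy). lra. }
  exists c. split; auto. intros x y Hx Hy.
  destruct (Hl (x, (y, tt))) as [[t1 [t2 []]] [Hin [Hb Hcl]]].
  { simpl. auto. }
  simpl in Hb, Hcl. destruct Hb as [Hb1 [Hb2 _]]. destruct Hcl as [Hc1 [Hc2 _]].
  specialize (Hlc _ Hin). unfold g in Hlc.
  destruct excluded_middle_informative as [Hr|Hr].
  2:{ exfalso; apply Hr; split; auto. }
  specialize (Hdelta t1 t2 Hr x y). simpl in Hdelta.
  assert (F x y < (1 + F t1 t2) / 2).
  { apply Hdelta; auto. }
  lra.
Qed.

Lemma decr_mono (p : R -> R) a b s t : a < s -> s < t -> t < b ->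
  (forall z, a < z < b -> ex_derive p z /\ Derive p z < 0) -> p t < p s.
Proof.
  intros H1 H2 H3 Hd.
  destruct (MVT_gen p s t (Derive p)) as [c [Hc Heq]].
  - intros z Hz. rewrite Rmin_left in Hz by lra. rewrite Rmax_right in Hz by lra.
    apply Derive_correct. apply Hd. lra.
  - intros z Hz. rewrite Rmin_left in Hz by lra. rewrite Rmax_right in Hz by lra.
    apply continuity_pt_filterlim. apply (@ex_derive_continuous R_AbsRing R_NormedModule). apply Hd. lra.
  - rewrite Rmin_left in Hc by lra. rewrite Rmax_right in Hc by lra.
    assert (Derive p c < 0) by (apply Hd; lra). nra.
Qed.

Lemma decr_top (p : R -> R) a b y : a < y < b ->
  (forall z, a < z < b -> ex_derive p z /\ Derive p z < 0) ->
  (forall eps, 0 < eps -> exists del, 0 < del /\ forall t, a < t < b -> Rabs (t - b) < del -> Rabs (p t - p b) < eps) ->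
  p b <= p y.
Proof.
  intros Hy Hd Hc. destruct (Rle_dec (p b) (p y)) as [|Hn]; auto. exfalso.
  destruct (Hc (p b - p y)) as [del [Hdel Ht]]; [lra|].
  set (t := b - Rmin del (b - y) / 2).
  assert (0 < Rmin del (b - y)) by (apply Rmin_pos; lra).
  assert (Rmin del (b - y) <= del) by apply Rmin_l.
  assert (Rmin del (b - y) <= b - y) by apply Rmin_r.
  specialize (Ht t ltac:(unfold t; lra) ltac:(unfold t; rewrite Rabs_left; lra)).
  apply Rabs_def2 in Ht.
  assert (p t < p y) by (apply (decr_mono p a b); unfold t; auto; lra).
  lra.
Qed.

Lemma decr_bot (p : R -> R) a b y : a < y < b ->
  (forall z, a < z < b -> ex_derive p z /\ Derive p z < 0) ->
  (forall eps, 0 < eps -> exists del, 0 < del /\ forall t, a < t < b -> Rabs (t - a) < del -> Rabs (p t - p a) < eps) ->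
  p y <= p a.
Proof.
  intros Hy Hd Hc. destruct (Rle_dec (p y) (p a)) as [|Hn]; auto. exfalso.
  destruct (Hc (p y - p a)) as [del [Hdel Ht]]; [lra|].
  set (t := a + Rmin del (y - a) / 2).
  assert (0 < Rmin del (y - a)) by (apply Rmin_pos; lra).
  assert (Rmin del (y - a) <= del) by apply Rmin_l.
  assert (Rmin del (y - a) <= y - a) by apply Rmin_r.
  specialize (Ht t ltac:(unfold t; lra) ltac:(unfold t; rewrite Rabs_right; lra)).
  apply Rabs_def2 in Ht.
  assert (p y < p t) by (apply (decr_mono p a b); unfold t; auto; lra).
  lra.
Qed.

Definition clamp (d : R) (eta : R -> R) (a b : R) := Rmax (-d) (Rmin b (eta a)).

Lemma clamp_in d eta a b : -d < eta a -> -d <= clamp d eta a b <= eta a.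
Proof.
  intros H. unfold clamp. split. apply Rmax_l. apply Rmax_lub. lra. apply Rmin_r.
Qed.

Lemma clamp_id d eta a b : -d <= b <= eta a -> clamp d eta a b = b.
Proof.
  intros H. unfold clamp. rewrite Rmin_left by lra. rewrite Rmax_right by lra. auto.
Qed.

Lemma ratio_cont (u v : R -> R -> R) (eta : R -> R) d x y :
  (forall a b, -d <= b <= eta a -> continuity_2d_pt u a b /\ continuity_2d_pt v a b /\ u a b <> 0) ->
  (forall a, cont1 eta a) -> (forall a, -d < eta a) ->
  continuity_2d_pt (fun a b => Rabs (v a (clamp d eta a b) / u a (clamp d eta a b))) x y.
Proof.
  intros Huv Hec Hed.
  set (q := clamp d eta x y).
  assert (Hq := clamp_in d eta x y (Hed x)).
  destruct (Huv x q Hq) as [Hu [Hv Hu0]].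
  assert (HG : continuity_2d_pt (fun a b => Rabs (v a b / u a b)) x q).
  { apply continuity_1d_2d_pt_comp with (f := Rabs) (g := fun a b => v a b / u a b).
    apply Rcontinuity_abs. unfold Rdiv. apply continuity_2d_pt_mult; auto.
    apply continuity_2d_pt_inv; auto. }
  intros eps. destruct (HG eps) as [d1 Hd1].
  assert (Hd1p := cond_pos d1).
  destruct (Hec x (d1/2)) as [d2 [Hd2 He2]]; [lra|].
  assert (Hm : 0 < Rmin (d1/2) d2) by (apply Rmin_pos; lra).
  exists (mkposreal _ Hm). simpl. intros a b Ha Hb.
  assert (Ha1 : Rabs (a - x) < d1/2) by (eapply Rlt_le_trans; [exact Ha|apply Rmin_l]).
  assert (Ha2 : Rabs (a - x) < d2) by (eapply Rlt_le_trans; [exact Ha|apply Rmin_r]).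
  assert (Hb1 : Rabs (b - y) < d1/2) by (eapply Rlt_le_trans; [exact Hb|apply Rmin_l]).
  specialize (He2 a Ha2).
  apply Hd1. lra.
  unfold q, clamp. eapply Rle_lt_trans. apply clamp_lip. lra.
Qed.

Lemma within_eps (f : R -> R -> R) (D : R -> R -> Prop) x y :
  filterlim (fun p : R * R => f (fst p) (snd p))
    (within (fun p : R * R => D (fst p) (snd p)) (locally (x, y))) (locally (f x y)) ->
  forall eps, 0 < eps -> exists del, 0 < del /\ forall a b, Rabs (a - x) < del -> Rabs (b - y) < del ->
    D a b -> Rabs (f a b - f x y) < eps.
Proof.
  intros H eps He. apply filterlim_locally with (eps := mkposreal eps He) in H.
  unfold within in H.
  destruct (proj2 (locally_2d_locally (fun a b => D a b -> ball (f x y) eps (f a b)) x y) H) as [del Hd].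
  exists del. split. apply cond_pos. intros a b Ha Hb HD. exact (Hd a b Ha Hb HD).
Qed.
Theorem lemma4p3 (g Patm : R) (u v P : R -> R -> R) (eta uinf : R -> R) (d : R) :
  0 < g ->
  in_W g Patm u v P eta uinf d ->
  (forall x y, 0 < x -> -d < y <= eta x -> pDx u x y < 0) ->
  exists c : R, c < 1 /\
    forall x y, Omega_bar d eta x y -> Rabs (v x y / u x y) <= c.
Proof.
  intros Hg [Hsw [[c0 [Hc0 Hu0]] [Hsv Hmono]]] Hux.
  destruct Hsw as [Hd Hetab Heta Huinf Hureg Hvreg HPreg Heven Hpar Hex Hey Hinc Hdyn Hkin Hbed Hdecay].
  destruct Hureg as [[Uu [HUuo [HUuin HUuck]]] _].
  destruct Hvreg as [[Uv [HUvo [HUvin HUvck]]] _].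
  destruct Heta as [Hetad [Hetac [Beta HBeta]]].
  destruct Hsv as [psi [m [gam [Hm [Hpsid [Hpsic [Hpsis [Hpsib [Hgam [Hvort Hgsign]]]]]]]]]].
  assert (Hetaex : forall x, ex_derive eta x) by (intros x; apply (Hetad 0%nat x); lia).
  assert (Hetacont : forall x, cont1 eta x) by (intros x; apply cont1_of_continuous; apply (Hetac 0%nat x); lia).
  assert (Hdetacont : forall x, cont1 (Derive eta) x) by (intros x; apply cont1_of_continuous; apply (Hetac 1%nat x); lia).
  assert (Hetale : forall x, eta x <= Beta).
  { intros x. specialize (HBeta 0%nat x ltac:(lia)). simpl in HBeta. apply Rabs_le_between in HBeta. lra. }
  assert (Hmon : monotone_wave d eta v).
  { destruct Hmono as [|[Htr1 Htr2]]; auto. exfalso.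
    assert (Hy : -d < (eta 1 - d)/2 < eta 1) by (specialize (Hetab 1); lra).
    specialize (Hux 1 ((eta 1 - d)/2) ltac:(lra) ltac:(lra)).
    unfold pDx in Hux.
    rewrite (Derive_ext (fun t => u t ((eta 1 - d)/2)) (fun _ => u 1 ((eta 1 - d)/2))) in Hux.
    rewrite Derive_const in Hux. lra.
    intros t. apply (Htr2 t 1); unfold Omega_bar; rewrite ?(Htr1 t 1); lra. }
  assert (Hcb : forall x y, Omega_bar d eta x y -> -d <= y <= eta x) by (unfold Omega_bar; auto).
  assert (Hule : forall x y, Omega_bar d eta x y -> u x y <= c0).
  { intros x y Hxy. refine (closure_le (fun t => u x t) (-d) (eta x) y c0 (Hetab x) Hxy _ _).
    apply cont1_of_2d_x. apply (Ck_cont2d 3 Uu u nil x y HUuck (HUuin x y Hxy)). simpl; lia.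
    intros t Ht. apply Hu0. unfold Omega; lra. }
  assert (Hinc' : forall x y, Omega_bar d eta x y -> pDx u x y + pDy v x y = 0).
  { intros x y Hxy. refine (closure_eq (fun t => pDx u x t + pDy v x t) (-d) (eta x) y 0 (Hetab x) Hxy _ _).
    apply (cont1_of_2d_x (fun a b => pDx u a b + pDy v a b)). apply continuity_2d_pt_plus.
    apply (Ck_cont2d 3 Uu u (true::nil) x y HUuck (HUuin x y Hxy)); simpl; lia.
    apply (Ck_cont2d 3 Uv v (false::nil) x y HUvck (HUvin x y Hxy)); simpl; lia.
    intros t Ht; apply Hinc; unfold Omega; lra. }
  assert (Hgam0 : forall z, 0 <= z <= m -> gam z <= 0).
  { destruct Hgam as [dg [Hdg Hgm]]. intros z Hz.
    refine (closure_le gam 0 m z 0 Hm Hz _ (fun t Ht => proj1 (Hgsign t Ht))).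
    apply cont1_of_continuous. apply (proj2 (Hgm 0%nat z ltac:(lra))). lia. }
  assert (Hpsir : forall x y, Omega d eta x y -> 0 <= psi x y <= m).
  { intros x y Hxy. unfold Omega in Hxy.
    assert (Hder : forall z, -d < z < eta x -> ex_derive (fun t => psi x t) z /\ Derive (fun t => psi x t) z < 0).
    { intros z Hz. destruct (Hpsid x z ltac:(unfold Omega; lra)) as [_ [H1 [H2 _]]].
      split; auto. unfold pDy in H2. rewrite H2. apply Rle_lt_trans with c0; auto; apply Hu0; unfold Omega; lra. }
    split.
    - rewrite <- (Hpsis x). apply (decr_top (fun t => psi x t) (-d) (eta x) y); auto.
      intros eps He. destruct (within_eps psi (Omega_bar d eta) x (eta x) (Hpsic x (eta x) ltac:(unfold Omega_bar; lra)) eps He) as [del [Hdel Hw]].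
      exists del. split; auto. intros t Ht Htd. apply Hw; auto. rewrite Rminus_diag, Rabs_R0; auto. unfold Omega_bar; lra.
    - rewrite <- (Hpsib x). apply (decr_bot (fun t => psi x t) (-d) (eta x) y); auto.
      intros eps He. destruct (within_eps psi (Omega_bar d eta) x (-d) (Hpsic x (-d) ltac:(unfold Omega_bar; specialize (Hetab x); lra)) eps He) as [del [Hdel Hw]].
      exists del. split; auto. intros t Ht Htd. apply Hw; auto. rewrite Rminus_diag, Rabs_R0; auto. unfold Omega_bar; lra. }
  assert (Hgpsi : forall x y, Omega_bar d eta x y -> gam (psi x y) <= 0).
  { intros x y Hxy. destruct (Req_dec y (eta x)) as [->|Hne1].
    rewrite Hpsis. apply Hgam0; lra.
    destruct (Req_dec y (-d)) as [->|Hne2].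
    rewrite Hpsib. apply Hgam0; lra.
    apply Hgam0. apply Hpsir. unfold Omega_bar, Omega in *; lra. }
  assert (Hkey : forall x y, 0 < x -> -d < y <= eta x ->
     pDx u x y + pDx v x y - (pDy u x y + pDy v x y) < 0).
  { intros x y Hx Hy. assert (Hxy : Omega_bar d eta x y) by (unfold Omega_bar; lra).
    specialize (Hvort x y Hxy). specialize (Hinc' x y Hxy). specialize (Hgpsi x y Hxy).
    specialize (Hux x y Hx Hy). lra. }
  assert (Hdu : forall x y, Omega_bar d eta x y -> differentiable_pt_lim u x y (pDx u x y) (pDy u x y)).
  { intros x y Hxy. apply (Ck3_diff Uu); auto. }
  assert (Hdv : forall x y, Omega_bar d eta x y -> differentiable_pt_lim v x y (pDx v x y) (pDy v x y)).
  { intros x y Hxy. apply (Ck3_diff Uv); auto. }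
  assert (Hchain : forall (f2 f3 : R -> R) s l2 l3, Omega_bar d eta (f2 s) (f3 s) ->
     derivable_pt_lim f2 s l2 -> derivable_pt_lim f3 s l3 ->
     derivable_pt_lim (fun t => u (f2 t) (f3 t) + v (f2 t) (f3 t)) s
       ((pDx u (f2 s) (f3 s) * l2 + pDy u (f2 s) (f3 s) * l3) +
        (pDx v (f2 s) (f3 s) * l2 + pDy v (f2 s) (f3 s) * l3))).
  { intros f2 f3 s l2 l3 Hc H2 H3.
    apply (derivable_pt_lim_plus (fun t => u (f2 t) (f3 t)) (fun t => v (f2 t) (f3 t))).
    apply derivable_pt_lim_comp_2d; auto. apply derivable_pt_lim_comp_2d; auto. }
  assert (Heta0 : Derive eta 0 = 0).
  { assert (H1 : is_derive (fun t => eta (-t)) 0 (- Derive eta 0)).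
    { auto_derive. apply Hetaex. replace (Derive (fun x => eta x) (-0)) with (Derive eta 0) by (rewrite Ropp_0; reflexivity). ring. }
    assert (H2 : is_derive (fun t => eta (-t)) 0 (Derive eta 0)).
    { apply (is_derive_ext eta). intros t; rewrite Heven; auto. apply Derive_correct; apply Hetaex. }
    assert (H3 := is_derive_unique _ _ _ H1). assert (H4 := is_derive_unique _ _ _ H2).
    rewrite H3 in H4. lra. }
  assert (Hsurf : forall s, 0 <= s -> 0 < 1 + Derive eta s).
  { apply (surface_abstract (fun s => 1 + Derive eta s) (fun s => u s (eta s))
      (fun s => u s (eta s) + v s (eta s))
      (fun s => (pDx u s (eta s) * 1 + pDy u s (eta s) * Derive eta s) + (pDx v s (eta s) * 1 + pDy v s (eta s) * Derive eta s))).
    - rewrite Heta0; lra.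
    - intros s _ eps He. destruct (Hdetacont s eps He) as [del [Hdel H]]. exists del; split; auto.
      intros t Ht. replace (1 + Derive eta t - (1 + Derive eta s)) with (Derive eta t - Derive eta s) by ring. auto.
    - intros s _. split. apply Rle_lt_trans with c0; [|lra]. apply Hule. unfold Omega_bar. specialize (Hetab s); lra.
      rewrite Hkin. ring.
    - intros s Hs He0. split.
      + apply (Hchain (fun t => t) eta). unfold Omega_bar. specialize (Hetab s); lra.
        apply derivable_pt_lim_id. apply is_derive_Reals. apply Derive_correct. apply Hetaex.
      + assert (Hde : Derive eta s = -1) by lra. rewrite Hde.
        specialize (Hkey s (eta s) Hs ltac:(specialize (Hetab s); lra)). lra. }
  assert (Hv0 : forall t, Omega_bar d eta 0 t -> v 0 t = 0).
  { intros t Ht. destruct (Hpar 0 t Ht) as [_ [_ H]]. rewrite Ropp_0 in H. lra. }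
  assert (Hint : forall x y, 0 < x -> Omega_bar d eta x y -> u x y + v x y < 0).
  { intros x y Hx Hxy. unfold Omega_bar in Hxy.
    assert (Hphi := line_abstract (fun r => eta (x - r) - (y + r))
      (fun r => u (x - r) (y + r) + v (x - r) (y + r))
      (fun r => (pDx u (x - r) (y + r) * (-1) + pDy u (x - r) (y + r) * 1) +
                (pDx v (x - r) (y + r) * (-1) + pDy v (x - r) (y + r) * 1)) x Hx).
    cbv beta in Hphi. replace (x - 0) with x in Hphi by ring. replace (y + 0) with y in Hphi by ring.
    apply Hphi; clear Hphi.
    - intros r _ eps He. destruct (Hetacont (x - r) (eps/2)) as [del [Hdel H]]; [lra|].
      exists (Rmin del (eps/2)). split. apply Rmin_pos; lra.
      intros t Ht. assert (Ht1 : Rabs (t - r) < del) by (eapply Rlt_le_trans; [exact Ht|apply Rmin_l]).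
      assert (Ht2 : Rabs (t - r) < eps/2) by (eapply Rlt_le_trans; [exact Ht|apply Rmin_r]).
      specialize (H (x - t) ltac:(replace (x - t - (x - r)) with (- (t - r)) by ring; rewrite Rabs_Ropp; auto)).
      replace (eta (x - t) - (y + t) - (eta (x - r) - (y + r))) with ((eta (x - t) - eta (x - r)) - (t - r)) by ring.
      eapply Rle_lt_trans. apply Rabs_triang. rewrite Rabs_Ropp. lra.
    - lra.
    - intros r Hr Hpr. split.
      + apply (Hchain (fun r => x - r) (fun r => y + r)).
        unfold Omega_bar; lra.
        apply is_derive_Reals. auto_derive; auto; ring.
        apply is_derive_Reals. auto_derive; auto; ring.
      + intros Hr'. specialize (Hkey (x - r) (y + r) ltac:(lra) ltac:(lra)). lra.
    - intros Hpx. replace (x - x) with 0 by ring. replace (x - x) with 0 in Hpx by ring.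
      assert (Hc : Omega_bar d eta 0 (y + x)) by (unfold Omega_bar; lra).
      rewrite (Hv0 _ Hc). specialize (Hule 0 (y + x) Hc). lra.
    - intros r Hr Hz. replace (y + r) with (eta (x - r)) by lra.
      rewrite Hkin. specialize (Hsurf (x - r) ltac:(lra)).
      assert (u (x - r) (eta (x - r)) < 0).
      { apply Rle_lt_trans with c0; [|lra]. apply Hule. unfold Omega_bar. specialize (Hetab (x - r)); lra. }
      nra. }
  assert (Hfrac : forall a b, a < 0 -> 0 <= b -> b < - a -> Rabs (b / a) < 1).
  { intros a b Ha Hb Hba. set (q := b / (- a)).
    assert (Hq : q * (- a) = b) by (unfold q; field; lra).
    replace (b / a) with (- q) by (unfold q; field; lra). rewrite Rabs_Ropp.
    assert (0 <= q) by nra. rewrite Rabs_right by lra. nra. }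
  assert (Hpos : forall x y, 0 <= x -> Omega_bar d eta x y -> Rabs (v x y / u x y) < 1).
  { intros x y Hx Hxy. assert (Hu := Hule x y Hxy).
    destruct (Req_dec x 0) as [->|Hx0].
    - rewrite (Hv0 y Hxy). unfold Rdiv. rewrite Rmult_0_l, Rabs_R0. lra.
    - destruct (Req_dec y (-d)) as [->|Hyd].
      + rewrite Hbed. unfold Rdiv. rewrite Rmult_0_l, Rabs_R0. lra.
      + assert (Hvp : 0 < v x y) by (apply Hmon; unfold Omega_bar in Hxy; lra).
        specialize (Hint x y ltac:(lra) Hxy). apply Hfrac; lra. }
  assert (Hpt : forall x y, Omega_bar d eta x y -> Rabs (v x y / u x y) < 1).
  { intros x y Hxy. destruct (Rle_dec 0 x) as [Hx|Hx]. apply Hpos; auto.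
    assert (Hxy' : Omega_bar d eta (-x) y) by (unfold Omega_bar in *; rewrite Heven; auto).
    specialize (Hpos (-x) y ltac:(lra) Hxy'). destruct (Hpar x y Hxy) as [H1 [_ H2]].
    rewrite H1, H2 in Hpos. replace (- v x y / u x y) with (- (v x y / u x y)) in Hpos by (unfold Rdiv; ring).
    rewrite Rabs_Ropp in Hpos. auto. }
  destruct (Hdecay (- c0 / 2) ltac:(lra)) as [M HM].
  destruct (compact_sup (fun a b => Rabs (v a (clamp d eta a b) / u a (clamp d eta a b))) (-M) M (-d) Beta) as [c1 [Hc1 Hc1b]].
  { intros x y Hx Hy. split.
    - apply ratio_cont; auto. intros a b Hab.
      assert (Hab' : Omega_bar d eta a b) by (unfold Omega_bar; auto).
      split. apply (Ck_cont2d 3 Uu u nil a b HUuck (HUuin a b Hab')); simpl; lia.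
      split. apply (Ck_cont2d 3 Uv v nil a b HUvck (HUvin a b Hab')); simpl; lia.
      specialize (Hule a b Hab'). lra.
    - apply Hpt. unfold Omega_bar. apply clamp_in. auto. }
  exists (Rmax c1 (1/2)). split. apply Rmax_case; lra.
  intros x y Hxy.
  destruct (Rlt_dec M (Rabs x)) as [Hx|Hx].
  - destruct (HM x Hx) as [_ H]. destruct (H y nil Hxy ltac:(simpl; lia)) as [Hv _]. simpl in Hv.
    assert (Hu := Hule x y Hxy).
    rewrite Rabs_div by lra. rewrite (Rabs_left (u x y)) by lra.
    apply Rle_trans with (1/2); [|apply Rmax_r].
    set (q := Rabs (v x y) / - u x y).
    assert (Hq : q * (- u x y) = Rabs (v x y)) by (unfold q; field; lra).
    nra.
  - apply Rnot_lt_le in Hx. apply Rabs_le_between in Hx.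
    unfold Omega_bar in Hxy.
    specialize (Hc1b x y Hx ltac:(specialize (Hetale x); lra)). cbv beta in Hc1b.
    rewrite clamp_id in Hc1b by auto.
    eapply Rle_trans; [exact Hc1b|apply Rmax_l].
Qed.
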